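(* In the setting described in the context, suppose $p_i,p_j,p_k,p_l,p_u,p_w\in S_1$ satisfy $d(p_i,p_k)\ne d(p_j,p_l)$, $d(p_i,p_u)\ne d(p_j,p_w)$ and $d(p_k,p_u)\ne d(p_l,p_w)$. If $C_2$ is a conic, then $|C_{ij}\cap C_{kl}\cap C_{uw}|\le4$.
   Context: A plane algebraic curve is an infinite set $Z_{\mathbb{R}}(f)=\{(a,b)\in\mathbb{R}^2:f(a,b)=0\}$ for a nonzero $f\in\mathbb{R}[x,y]$; its degree is the minimal degree of such $f$; it is irreducible if $f$ can be chosen irreducible over $\mathbb{R}$. A conic is a curve of degree 2 that is not a union of two lines. Setting: $d\ge1$; $C_1=Z_{\mathbb{R}}(f_1)$ and $C_2=Z_{\mathbb{R}}(f_2)$ are irreducible plane algebraic curves of degree at most $d$ (possibly equal), with $f_1,f_2$ of minimum degree. $S_1=\{p_1,\dots,p_m\}\subset C_1$ and $S_2=\{q_1,\dots,q_n\}\subset C_2$ are sets of distinct points, $p_i=(a_i,b_i)$, satisfying: (1) neither $C_1$ nor $C_2$ is a vertical line; (2) $S_1\cap S_2=\emptyset$; (3) if $C_1$ (resp. $C_2$) is a circle, its center is not in $S_2$ (resp. $S_1$); (4) if $C_1$ (resp. $C_2$) is a circle, every concentric circle contains at most one point of $S_2$ (resp. $S_1$); (5) if $C_1$ (resp. $C_2$) is a line, then for every line $\ell$ parallel to it, the union of $\ell$ and its reflection in $C_1$ (resp. $C_2$) contains at most one point of $S_2$ (resp. $S_1$); (6) if $C_1$ (resp. $C_2$) is a line,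 every orthogonal line contains at most one point of $S_2$ (resp. $S_1$). For $1\le i,j\le m$, $C_{ij}\subset\mathbb{R}^4$ is the set of $(x,y,x',y')$ with $f_2(x,y)=0$, $f_2(x',y')=0$ and $(x-a_i)^2+(y-b_i)^2=(x'-a_j)^2+(y'-b_j)^2$. $d(\cdot,\cdot)$ is Euclidean distance. *)

(* Defs.v *)
From mathcomp Require Import all_boot all_order all_algebra.
From mathcomp Require Import mpoly.
From mathcomp Require Import reals.
Set Implicit Arguments.
Unset Strict Implicit.
Unset Printing Implicit Defensive.
Import GRing.Theory Num.Theory.
Local Open Scope ring_scope.

Section PlaneCurves.
Variable R : realType.

Definition pt := (R * R)%type.

Definition seteq (A B : pt -> Prop) := forall z, A z <-> B z.

(* evaluation of f in R[x,y] at (a,b): variable 0 is x, variable 1 is y *)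
Definition ev (f : {mpoly R[2]}) (z : pt) : R :=
  f.@[fun i : 'I_2 => if i == ord0 then z.1 else z.2].

(* total degree of a (nonzero) bivariate polynomial *)
Definition mdegree (f : {mpoly R[2]}) : nat := (msize f).-1.

(* irreducibility over R in R[x,y]: nonconstant, and every factorization has a
   constant (i.e. unit, since R is a field) factor *)
Definition irreducible_mpoly (f : {mpoly R[2]}) : Prop :=
  (0 < mdegree f)%N /\
  forall g h : {mpoly R[2]}, f = g * h -> mdegree g = 0%N \/ mdegree h = 0%N.

Definition zset (f : {mpoly R[2]}) : pt -> Prop := fun z => ev f z = 0.

Definition infinite_set (A : pt -> Prop) :=
  forall s : seq pt, exists z, A z /\ z \notin s.

Definition defining_poly (C : pt -> Prop) (f : {mpoly R[2]}) :=
  f != 0 /\ seteq C (zset f).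

Definition plane_curve (C : pt -> Prop) :=
  infinite_set C /\ exists f, defining_poly C f.

(* f defines C and has minimal degree among the defining polynomials of C;
   the degree of the curve C is then mdegree f *)
Definition min_degree_poly (C : pt -> Prop) (f : {mpoly R[2]}) :=
  defining_poly C f /\ forall g, defining_poly C g -> (mdegree f <= mdegree g)%N.

Definition irreducible_curve (C : pt -> Prop) :=
  plane_curve C /\ exists f, irreducible_mpoly f /\ seteq C (zset f).

Definition line_set (a b c : R) : pt -> Prop :=
  fun z => a * z.1 + b * z.2 + c = 0.

Definition is_line (C : pt -> Prop) :=
  exists a b c, (a, b) != (0, 0) /\ seteq C (line_set a b c).

Definition is_vertical_line (C : pt -> Prop) :=
  exists c : R, seteq C (fun z => z.1 = c).

Definition circle_set (x0 y0 r : R) : pt -> Prop :=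
  fun z => (z.1 - x0) ^+ 2 + (z.2 - y0) ^+ 2 = r ^+ 2.

Definition is_circle (C : pt -> Prop) :=
  exists x0 y0 r, 0 < r /\ seteq C (circle_set x0 y0 r).

Definition is_conic (C : pt -> Prop) :=
  plane_curve C /\
  (exists f, min_degree_poly C f /\ mdegree f = 2%N) /\
  ~ (exists L1 L2, is_line L1 /\ is_line L2 /\ seteq C (fun z => L1 z \/ L2 z)).

Definition reflect_pt (a b c : R) (z : pt) : pt :=
  let t := 2 * (a * z.1 + b * z.2 + c) / (a ^+ 2 + b ^+ 2) in
  (z.1 - t * a, z.2 - t * b).

Definition reflect_set (a b c : R) (A : pt -> Prop) : pt -> Prop :=
  fun z => exists w, A w /\ z = reflect_pt a b c w.

Definition at_most_one_of (n : nat) (s : 'I_n -> pt) (A : pt -> Prop) :=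
  forall k k' : 'I_n, A (s k) -> A (s k') -> k = k'.

(* conditions (3),(4) for the curve C and the point set S of the other curve *)
Definition circle_conditions (C : pt -> Prop) (n : nat) (s : 'I_n -> pt) :=
  forall x0 y0 r, 0 < r -> seteq C (circle_set x0 y0 r) ->
    (forall k, s k <> (x0, y0)) /\
    (forall r', 0 < r' -> at_most_one_of s (circle_set x0 y0 r')).

(* conditions (5),(6) for the curve C and the point set S of the other curve;
   the lines parallel to C = {a x + b y + c = 0} are the {a x + b y + c' = 0},
   the lines orthogonal to it are the {-b x + a y + c' = 0} *)
Definition line_conditions (C : pt -> Prop) (n : nat) (s : 'I_n -> pt) :=
  forall a b c, (a, b) != (0, 0) -> seteq C (line_set a b c) ->
    (forall c', at_most_one_of s
        (fun z => line_set a b c' z \/ reflect_set a b c (line_set a b c') z)) /\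
    (forall c', at_most_one_of s (line_set (- b) a c')).

Definition dist (z w : pt) : R :=
  Num.sqrt ((z.1 - w.1) ^+ 2 + (z.2 - w.2) ^+ 2).

Definition Cset (f2 : {mpoly R[2]}) (pi pj : pt) : (R * R * R * R) -> Prop :=
  fun v => let: (x, y, x', y') := v in
    ev f2 (x, y) = 0 /\ ev f2 (x', y') = 0 /\
    (x - pi.1) ^+ 2 + (y - pi.2) ^+ 2 = (x' - pj.1) ^+ 2 + (y' - pj.2) ^+ 2.

Definition card_le (A : (R * R * R * R) -> Prop) (k : nat) :=
  forall s : seq (R * R * R * R), uniq s -> (forall v, v \in s -> A v) ->
    (size s <= k)%N.

End PlaneCurves.

(* Main.v *)
Require Import Defs.
From mathcomp Require Import all_boot all_order all_algebra.
From mathcomp Require Import mpoly.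
From mathcomp Require Import reals.
From mathcomp.algebra_tactics Require Import ring lra.
Import Order.TTheory GRing.Theory Num.Theory.
Local Open Scope ring_scope.
Set Implicit Arguments.
Unset Strict Implicit.

Section Q.
Variable R : realType.

Record quad := Quad {qa : R; qb : R; qc : R; qd : R; qe : R; qf : R}.
Definition qev (q : quad) (z : R * R) : R :=
  qa q * z.1 ^+ 2 + qb q * z.1 * z.2 + qc q * z.2 ^+ 2 + qd q * z.1 + qe q * z.2 + qf q.

Lemma quad_zero q : (forall z, qev q z = 0) ->
  (qa q = 0 /\ qb q = 0 /\ qc q = 0 /\ qd q = 0 /\ qe q = 0 /\ qf q = 0).
Proof.
case: q => a b c d e f /= H.
have h0 := H (0,0); have h1 := H (1,0); have h2 := H (-1,0).
have h3 := H (0,1); have h4 := H (0,-1); have h5 := H (1,1).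
rewrite /qev /= in h0 h1 h2 h3 h4 h5.
have hf : f = 0 by lra.
have ha : a = 0 by lra.
have hd : d = 0 by lra.
have hc : c = 0 by lra.
have he : e = 0 by lra.
by do !split => //; lra.
Qed.

Definition qadd (p q : quad) := Quad (qa p + qa q) (qb p + qb q) (qc p + qc q)
  (qd p + qd q) (qe p + qe q) (qf p + qf q).
Lemma qaddE p q z : qev (qadd p q) z = qev p z + qev q z.
Proof. rewrite /qev /=; ring. Qed.

Lemma mono_quad (c : R) (m : 'X_{1..2}) : (mdeg m < 3)%N ->
  exists q, forall z : R * R, c * (z.1 ^+ m ord0 * z.2 ^+ m (lift ord0 ord0)) = qev q z.
Proof.
rewrite mdegE big_ord_recl big_ord1.
set a := m ord0; set b := m _.
case: a => [|[|[|a]]]; case: b => [|[|[|b]]] //= _.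
- by exists (Quad 0 0 0 0 0 c) => z; rewrite /qev /=; ring.
- by exists (Quad 0 0 0 0 c 0) => z; rewrite /qev /=; ring.
- by exists (Quad 0 0 c 0 0 0) => z; rewrite /qev /=; ring.
- by exists (Quad 0 0 0 c 0 0) => z; rewrite /qev /=; ring.
- by exists (Quad 0 c 0 0 0 0) => z; rewrite /qev /=; ring.
- by exists (Quad c 0 0 0 0 0) => z; rewrite /qev /=; ring.
Qed.

Lemma ev_quad (f : {mpoly R[2]}) : (msize f <= 3)%N ->
  exists q, forall z, ev f z = qev q z.
Proof.
move=> hs.
have : forall m, m \in msupp f -> (mdeg m < 3)%N.
  by move=> m /msize_mdeg_lt /leq_trans; apply.
move=> H.
have E : forall z, ev f z = \sum_(m <- msupp f) f@_m * (z.1 ^+ m ord0 * z.2 ^+ m (lift ord0 ord0)).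
  by move=> z; rewrite /ev mevalE; apply: eq_bigr => m _; rewrite big_ord_recl big_ord1 /=.
suff: exists q, forall z, \sum_(m <- msupp f) f@_m * (z.1 ^+ m ord0 * z.2 ^+ m (lift ord0 ord0)) = qev q z.
  by case=> q hq; exists q => z; rewrite E hq.
elim: (msupp f) H => [|m s IH] H.
  by exists (Quad 0 0 0 0 0 0) => z; rewrite big_nil /qev /=; ring.
have [q1 h1] := mono_quad (f@_m) (H m (mem_head _ _)).
have [q2 h2] := IH (fun m' hm' => H m' (mem_behead (s:=m::s) hm')).
by exists (qadd q1 q2) => z; rewrite big_cons qaddE h1 h2.
Qed.

Definition cross (u v : R * R) := u.1 * v.2 - u.2 * v.1.
Definition psub (u v : R * R) : R * R := (u.1 - v.1, u.2 - v.2).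

Lemma pt_eq (u v : R * R) : u = v <-> u.1 = v.1 /\ u.2 = v.2.
Proof. by case: u => a b; case: v => c d /=; split => [[-> ->]|[-> ->]]. Qed.

Lemma pt_neq (u v : R * R) : u <> v -> u.1 != v.1 \/ u.2 != v.2.
Proof.
move=> h; case: (eqVneq u.1 v.1) => [e1|]; last by left.
case: (eqVneq u.2 v.2) => [e2|]; last by right.
by exfalso; apply: h; apply/pt_eq.
Qed.

Lemma sumsq_eq0 (a b : R) : a ^+ 2 + b ^+ 2 = 0 -> a = 0 /\ b = 0.
Proof. move=> h; split; nra. Qed.

Lemma pt_neq_sq (u v : R * R) : u <> v -> (u.1 - v.1) ^+ 2 + (u.2 - v.2) ^+ 2 != 0.
Proof.
move=> h; apply/eqP => /sumsq_eq0 [h1 h2]; apply: h; apply/pt_eq.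
by split; apply/eqP; rewrite -subr_eq0; apply/eqP.
Qed.

Lemma lemF q (z1 z2 z3 : R * R) :
  z1 <> z2 -> z3 <> z1 -> z3 <> z2 -> cross (psub z2 z1) (psub z3 z1) = 0 ->
  qev q z1 = 0 -> qev q z2 = 0 -> qev q z3 = 0 ->
  exists al be ga, forall z, qev q z = cross (psub z2 z1) (psub z z1) * (al * z.1 + be * z.2 + ga).
Proof.
case: q => a b c d e f; case: z1 => x1 y1; case: z2 => x2 y2; case: z3 => x3 y3.
rewrite /cross /psub /= => h12 h31 h32 hcr q1 q2 q3.
set v1 := x2 - x1; set v2 := y2 - y1.
have hn : v1 ^+ 2 + v2 ^+ 2 != 0 by exact: (pt_neq_sq (fun e => h12 (esym e))).
pose A := a * v1 ^+ 2 + b * v1 * v2 + c * v2 ^+ 2.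
pose B := 2 * a * x1 * v1 + b * (x1 * v2 + y1 * v1) + 2 * c * y1 * v2 + d * v1 + e * v2.
pose D := 2 * a * v1 * (- v2) + b * (v1 * v1 + v2 * (- v2)) + 2 * c * v2 * v1.
pose E := a * v2 ^+ 2 + b * (- v2) * v1 + c * v1 ^+ 2.
pose F := 2 * a * x1 * (- v2) + b * (x1 * v1 + y1 * (- v2)) + 2 * c * y1 * v1 + d * (- v2) + e * v1.
have expand : forall t s, qev (Quad a b c d e f) (x1 + t * v1 - s * v2, y1 + t * v2 + s * v1)
    = A * t ^+ 2 + B * t + qev (Quad a b c d e f) (x1, y1) + s * (D * t + E * s + F).
  by move=> t s; rewrite /qev /A /B /D /E /F /=; ring.
pose tau := (v1 * (x3 - x1) + v2 * (y3 - y1)) / (v1 ^+ 2 + v2 ^+ 2).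
have e3 : (x3, y3) = (x1 + tau * v1 - 0 * v2, y1 + tau * v2 + 0 * v1).
  apply/pt_eq; rewrite /tau /=; split.
  - apply/eqP; rewrite -subr_eq0; apply/eqP.
    have -> : x3 - (x1 + tau * v1 - 0 * v2) = - v2 * ((x2 - x1) * (y3 - y1) - (y2 - y1) * (x3 - x1)) / (v1 ^+ 2 + v2 ^+ 2).
      by rewrite /tau /v1 /v2; field.
    by rewrite hcr; ring.
  - apply/eqP; rewrite -subr_eq0; apply/eqP.
    have -> : y3 - (y1 + tau * v2 + 0 * v1) = v1 * ((x2 - x1) * (y3 - y1) - (y2 - y1) * (x3 - x1)) / (v1 ^+ 2 + v2 ^+ 2).
      by rewrite /tau /v1 /v2; field.
    by rewrite hcr; ring.
have e2 : (x2, y2) = (x1 + 1 * v1 - 0 * v2, y1 + 1 * v2 + 0 * v1).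
  by apply/pt_eq; rewrite /v1 /v2 /=; split; ring.
have e1 : (x1, y1) = (x1 + 0 * v1 - 0 * v2, y1 + 0 * v2 + 0 * v1).
  by apply/pt_eq; rewrite /=; split; ring.
have C0 : qev (Quad a b c d e f) (x1, y1) = 0 by [].
move: q2 q3; rewrite -/(qev (Quad a b c d e f) (x2, y2)) -/(qev (Quad a b c d e f) (x3, y3)).
rewrite e2 e3 !expand C0 => q2 q3.
have t0 : tau != 0.
  apply/eqP => t0; apply: h31; rewrite e3 t0; apply/pt_eq => /=; split; ring.
have t1 : tau - 1 != 0.
  apply/eqP => t1; apply: h32; rewrite e3 e2.
  have -> : tau = 1 by apply/eqP; rewrite -subr_eq0; apply/eqP.
  by [].
have hA : A = 0.
  have : A * (tau * (tau - 1)) = 0.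
    transitivity ((A * tau ^+ 2 + B * tau + 0 + 0 * (D * tau + E * 0 + F)) -
       tau * (A * 1 ^+ 2 + B * 1 + 0 + 0 * (D * 1 + E * 0 + F))); first by ring.
    by rewrite q3 q2; ring.
  by move/eqP; rewrite mulf_eq0 mulf_eq0 (negbTE t0) (negbTE t1) /= orbF => /eqP.
have hB : B = 0.
  transitivity (A * 1 ^+ 2 + B * 1 + 0 + 0 * (D * 1 + E * 0 + F)); last by rewrite q2.
  by rewrite hA; ring.
pose n := v1 ^+ 2 + v2 ^+ 2.
exists ((D * v1 - E * v2) / n ^+ 2), ((D * v2 + E * v1) / n ^+ 2),
  (F / n - (D * v1 - E * v2) / n ^+ 2 * x1 - (D * v2 + E * v1) / n ^+ 2 * y1).
case=> x y /=.
pose t := (v1 * (x - x1) + v2 * (y - y1)) / n.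
pose s := (v1 * (y - y1) - v2 * (x - x1)) / n.
have ez : (x, y) = (x1 + t * v1 - s * v2, y1 + t * v2 + s * v1).
  by apply/pt_eq; rewrite /t /s /n /=; split; field.
rewrite ez expand C0 hA hB /t /s /n /=.
rewrite /v1 /v2 in hn *.
by field.
Qed.

Lemma mul_eq0_l (a b : R) : a * b = 0 -> b != 0 -> a = 0.
Proof. by move/eqP; rewrite mulf_eq0 => /orP [/eqP//|/eqP->]; rewrite eqxx. Qed.

Lemma mul_eq0_r (a b : R) : a * b = 0 -> a != 0 -> b = 0.
Proof. by rewrite mulrC => /mul_eq0_l. Qed.

Lemma lin_zero (al be ga : R) (z3 z4 z5 : R * R) :
  cross (psub z4 z3) (psub z5 z3) != 0 ->
  al * z3.1 + be * z3.2 + ga = 0 -> al * z4.1 + be * z4.2 + ga = 0 ->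
  al * z5.1 + be * z5.2 + ga = 0 -> forall z : R * R, al * z.1 + be * z.2 + ga = 0.
Proof.
case: z3 => x3 y3; case: z4 => x4 y4; case: z5 => x5 y5; rewrite /cross /psub /=.
move=> hc h3 h4 h5 z.
have ha : al = 0.
  apply: (mul_eq0_l _ hc).
  transitivity ((y5 - y3) * (al * x4 + be * y4 + ga - (al * x3 + be * y3 + ga)) -
     (y4 - y3) * (al * x5 + be * y5 + ga - (al * x3 + be * y3 + ga))); first by ring.
  by rewrite h3 h4 h5; ring.
have hb : be = 0.
  apply: (mul_eq0_l _ hc).
  transitivity ((x4 - x3) * (al * x5 + be * y5 + ga - (al * x3 + be * y3 + ga)) -
     (x5 - x3) * (al * x4 + be * y4 + ga - (al * x3 + be * y3 + ga))); first by ring.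
  by rewrite h3 h4 h5; ring.
rewrite ha hb in h3 *; lra.
Qed.

Definition noncol (Z : R * R -> Prop) := forall z1 z2 z3, Z z1 -> Z z2 -> Z z3 ->
  z1 <> z2 -> z3 <> z1 -> z3 <> z2 -> cross (psub z2 z1) (psub z3 z1) != 0.

Definition qlin (p : quad) (l : R) (q : quad) := Quad (qa p - l * qa q) (qb p - l * qb q)
  (qc p - l * qc q) (qd p - l * qd q) (qe p - l * qe q) (qf p - l * qf q).
Lemma qlinE p l q z : qev (qlin p l q) z = qev p z - l * qev q z.
Proof. rewrite /qev /=; ring. Qed.

Lemma five (f q : quad) (z1 z2 z3 z4 z5 : R * R) :
  noncol (fun z => qev f z = 0) ->
  qev f z1 = 0 -> qev f z2 = 0 -> qev f z3 = 0 -> qev f z4 = 0 -> qev f z5 = 0 ->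
  z1 <> z2 -> z1 <> z3 -> z1 <> z4 -> z1 <> z5 -> z2 <> z3 -> z2 <> z4 -> z2 <> z5 ->
  z3 <> z4 -> z3 <> z5 -> z4 <> z5 ->
  qev q z1 = 0 -> qev q z2 = 0 -> qev q z3 = 0 -> qev q z4 = 0 -> qev q z5 = 0 ->
  exists l, forall z, qev q z = l * qev f z.
Proof.
move=> nc f1 f2 f3 f4 f5 d12 d13 d14 d15 d23 d24 d25 d34 d35 d45 g1 g2 g3 g4 g5.
pose z6 := (2 * z2.1 - z1.1, 2 * z2.2 - z1.2).
have d61 : z6 <> z1.
  move/pt_eq => [e1 e2]; apply: d12; apply/pt_eq; rewrite /z6 /= in e1 e2; split; lra.
have d62 : z6 <> z2.
  move/pt_eq => [e1 e2]; apply: d12; apply/pt_eq; rewrite /z6 /= in e1 e2; split; lra.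
have c6 : cross (psub z2 z1) (psub z6 z1) = 0 by rewrite /cross /psub /z6 /=; ring.
have f6 : qev f z6 != 0.
  apply/eqP => f6; have := nc _ _ _ f1 f2 f6 d12 d61 d62; rewrite c6 eqxx //.
exists (qev q z6 / qev f z6) => z.
pose r := qlin q (qev q z6 / qev f z6) f.
have r1 : qev r z1 = 0 by rewrite qlinE g1 f1; ring.
have r2 : qev r z2 = 0 by rewrite qlinE g2 f2; ring.
have r6 : qev r z6 = 0 by rewrite qlinE; field.
have [al [be [ga hr]]] := lemF d12 d61 d62 c6 r1 r2 r6.
have m_t : forall zt, qev f zt = 0 -> qev r zt = 0 -> zt <> z1 -> zt <> z2 ->
    al * zt.1 + be * zt.2 + ga = 0.
  move=> zt ft rt dt1 dt2; have := nc _ _ _ f1 f2 ft d12 dt1 dt2.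
  by move: rt; rewrite hr => /mul_eq0_r H /H.
have rz3 : qev r z3 = 0 by rewrite qlinE g3 f3; ring.
have rz4 : qev r z4 = 0 by rewrite qlinE g4 f4; ring.
have rz5 : qev r z5 = 0 by rewrite qlinE g5 f5; ring.
have m3 := m_t _ f3 rz3 (fun e => d13 (esym e)) (fun e => d23 (esym e)).
have m4 := m_t _ f4 rz4 (fun e => d14 (esym e)) (fun e => d24 (esym e)).
have m5 := m_t _ f5 rz5 (fun e => d15 (esym e)) (fun e => d25 (esym e)).
have c345 := nc _ _ _ f3 f4 f5 d34 (fun e => d35 (esym e)) (fun e => d45 (esym e)).
have := lin_zero c345 m3 m4 m5 z.
have := hr z; rewrite qlinE => h h0; rewrite h0 mulr0 in h.
by apply/eqP; rewrite -subr_eq0 h.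
Qed.

Definition mon (i j : nat) : 'X_{1..2} := [multinom (if k == ord0 then i else j) | k < 2].
Definition Lmon := [seq mon p.1 p.2 | p <- [:: (2,0); (1,1); (0,2); (1,0); (0,1); (0,0)]%N].

Lemma mon_inj : injective (fun p : nat * nat => mon p.1 p.2).
Proof.
case=> i j [i' j'] /= /mnmP e.
have e0 := e ord0; have e1 := e (lift ord0 ord0).
by rewrite !mnmE /= in e0 e1; rewrite e0 e1.
Qed.

Lemma uniq_Lmon : uniq Lmon.
Proof. by rewrite map_inj_uniq //; apply: mon_inj. Qed.

Lemma mdeg_small (m : 'X_{1..2}) : (mdeg m < 3)%N -> m \in Lmon.
Proof.
rewrite mdegE big_ord_recl big_ord1 /= => hm.
have -> : m = mon (m ord0) (m (lift ord0 ord0)).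
  apply/mnmP => k; rewrite mnmE; case: k => [[|[|k]] hk] //=.
  - by congr (m _); apply: val_inj.
  - by congr (m _); apply: val_inj.
move: hm; set a := m ord0; set b := m _.
case: a => [|[|[|a]]]; case: b => [|[|[|b]]] //= _.
all: by rewrite /Lmon !inE eqxx ?orbT.
Qed.

Lemma ev_coef (f : {mpoly R[2]}) : (msize f <= 3)%N -> forall z,
  ev f z = qev (Quad f@_(mon 2 0) f@_(mon 1 1) f@_(mon 0 2) f@_(mon 1 0) f@_(mon 0 1) f@_(mon 0 0)) z.
Proof.
move=> hs z; rewrite /ev mevalE.
have P : perm_eq (msupp f) [seq m <- Lmon | m \in msupp f].
  apply: uniq_perm; first exact: msupp_uniq.
    by rewrite filter_uniq // uniq_Lmon.
  move=> m; rewrite mem_filter; case: (boolP (m \in msupp f)) => //= h.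
  by rewrite mdeg_small //; apply: leq_trans (msize_mdeg_lt h) hs.
rewrite (perm_big _ P) big_filter big_mkcond /=.
have cond : forall m : 'X_{1..2}, (if m \in msupp f then f@_m *
    \prod_i (if i == ord0 then z.1 else z.2) ^+ m i else 0) =
    f@_m * ((z.1 ^+ m ord0) * (z.2 ^+ m (lift ord0 ord0))).
  move=> m; rewrite big_ord_recl big_ord1 /=.
  by case: ifP => // /negbT /memN_msupp_eq0 ->; rewrite mul0r.
under eq_bigr => m _ do rewrite cond.
rewrite /Lmon /= !big_cons big_nil /mon !mnmE /= /qev /=; ring.
Qed.

Lemma evzero (f : {mpoly R[2]}) : (msize f <= 3)%N -> (forall z, ev f z = 0) -> f = 0.
Proof.
move=> hs h.
have [h1 [h2 [h3 [h4 [h5 h6]]]]] := quad_zero (fun z => etrans (esym (ev_coef hs z)) (h z)).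
rewrite /= in h1 h2 h3 h4 h5 h6.
rewrite [f]mpolyE big_seq big1 // => m hm.
have : m \in Lmon by apply: mdeg_small; apply: leq_trans (msize_mdeg_lt hm) hs.
rewrite /Lmon !inE.
do 5 (case/orP; first by move/eqP ->; rewrite ?h1 ?h2 ?h3 ?h4 ?h5 ?h6 scale0r).
by move/eqP ->; rewrite ?h1 ?h2 ?h3 ?h4 ?h5 ?h6 scale0r.
Qed.

Lemma pair_neq0 (a b : R) : (a, b) != (0, 0) <-> a != 0 \/ b != 0.
Proof.
rewrite xpair_eqE negb_and; split; first by case/orP; [left|right].
by case=> ->; rewrite ?orbT.
Qed.

Lemma conic_noncol (C : pt R -> Prop) (f2 : {mpoly R[2]}) q :
  is_conic C -> defining_poly C f2 -> (msize f2 <= 3)%N -> (forall z, ev f2 z = qev q z) ->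
  noncol (fun z => qev q z = 0).
Proof.
move=> [_ [_ hnot]] [f0 hC] hs hq [x1 y1] [x2 y2] z3 q1 q2 q3 d12 d31 d32; apply/eqP => hcr.
have [al [be [ga hr]]] := lemF d12 d31 d32 hcr q1 q2 q3.
move: hr; rewrite /cross /psub /= => hr.
pose L1 := line_set (- (y2 - y1)) (x2 - x1) ((y2 - y1) * x1 - (x2 - x1) * y1).
have hL1 : is_line L1.
  exists (- (y2 - y1)), (x2 - x1), ((y2 - y1) * x1 - (x2 - x1) * y1); split => //.
  apply/pair_neq0; case: (pt_neq d12) => /= h; [right|left] => //.
    by rewrite subr_eq0 eq_sym.
  by rewrite oppr_eq0 subr_eq0 eq_sym.
have crossE : forall z : pt R, (x2 - x1) * (z.2 - y1) - (y2 - y1) * (z.1 - x1) = 0 <-> L1 z.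
  by move=> z; rewrite /L1 /line_set; split => h; rewrite -h; ring.
have Cz : forall z, C z <-> (x2 - x1) * (z.2 - y1) - (y2 - y1) * (z.1 - x1) = 0 \/
                          al * z.1 + be * z.2 + ga = 0.
  move=> z; rewrite (hC z) /zset hq hr; split.
    by move/eqP; rewrite mulf_eq0 => /orP [/eqP|/eqP]; [left|right].
  by case=> ->; rewrite ?mul0r ?mulr0.
case: (boolP ((al, be) != (0, 0))) => hab.
  apply: hnot; exists L1, (line_set al be ga); split => //; split.
    by exists al, be, ga.
  by move=> z; rewrite Cz crossE.
move: hab; rewrite negbK xpair_eqE => /andP [/eqP ha /eqP hb].
case: (eqVneq ga 0) => hg.
  suff : f2 = 0 by move/eqP: f0.
  apply: (evzero hs) => z; rewrite hq hr ha hb hg; ring.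
apply: hnot; exists L1, L1; split => //; split => // z.
rewrite Cz crossE ha hb !mul0r !add0r; split; [case=> h; [by left|by move/eqP: hg; rewrite h]|by case=> h; left].
Qed.
End Q.

Section B.
Variable R : realType.

Lemma line3 (Z : R * R -> Prop) : noncol Z -> forall (P u : R * R), u <> (0, 0) ->
  Z P -> Z (P.1 + u.1, P.2 + u.2) -> Z (P.1 + 2 * u.1, P.2 + 2 * u.2) -> False.
Proof.
move=> nc [p1 p2] [u1 u2] hu h0 h1 h2.
have hu' := pt_neq hu; rewrite /= in hu'.
have d1 : (p1, p2) <> (p1 + u1, p2 + u2).
  move/pt_eq => /= [e1 e2]; case: hu' => /eqP; apply; lra.
have d2 : (p1 + 2 * u1, p2 + 2 * u2) <> (p1, p2).
  move/pt_eq => /= [e1 e2]; case: hu' => /eqP; apply; lra.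
have d3 : (p1 + 2 * u1, p2 + 2 * u2) <> (p1 + u1, p2 + u2).
  move/pt_eq => /= [e1 e2]; case: hu' => /eqP; apply; lra.
have := nc _ _ _ h0 h1 h2 d1 d2 d3; rewrite /cross /psub /=.
have -> : (p1 + u1 - p1) * (p2 + 2 * u2 - p2) - (p2 + u2 - p2) * (p1 + 2 * u1 - p1) = 0 by ring.
by rewrite eqxx.
Qed.


Lemma solve2 (a b c d x y : R) : a * d - b * c != 0 ->
  a * x + b * y = 0 -> c * x + d * y = 0 -> x = 0 /\ y = 0.
Proof.
move=> hd h1 h2; split.
  apply: (mul_eq0_r (a := a * d - b * c)) => //.
  transitivity (d * (a * x + b * y) - b * (c * x + d * y)); first by ring.
  by rewrite h1 h2; ring.
apply: (mul_eq0_r (a := a * d - b * c)) => //.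
transitivity (a * (c * x + d * y) - c * (a * x + b * y)); first by ring.
by rewrite h1 h2; ring.
Qed.

Lemma sq0 (x : R) : x ^+ 2 = 0 -> x = 0.
Proof. by move=> h; have [] := sumsq_eq0 (a := x) (b := 0); rewrite // h; ring. Qed.

Section ALG.
Variables (m11 m12 m21 m22 t1 t2 g1 g2 c0 ga k11 k12 k22 : R).
Hypothesis hk11 : k11 = 1 - m11 ^+ 2 - m21 ^+ 2.
Hypothesis hk12 : k12 = - (m11 * m12 + m21 * m22).
Hypothesis hk22 : k22 = 1 - m12 ^+ 2 - m22 ^+ 2.
Definition phi (z : R * R) := k11 * z.1 ^+ 2 + 2 * k12 * z.1 * z.2 + k22 * z.2 ^+ 2
  + 2 * g1 * z.1 + 2 * g2 * z.2 + c0.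
Definition Tm (z : R * R) := (m11 * z.1 + m12 * z.2 + t1, m21 * z.1 + m22 * z.2 + t2).
Definition qK (u : R * R) := k11 * u.1 ^+ 2 + 2 * k12 * u.1 * u.2 + k22 * u.2 ^+ 2.
Hypothesis hdet : m11 * m22 - m12 * m21 != 0.
Hypothesis H : forall z, phi (Tm z) = ga * phi z.
Hypothesis nc : noncol (fun z => phi z = 0).
Variables z1 z2 : R * R.
Hypotheses (hz1 : phi z1 = 0) (hz2 : phi z2 = 0) (d12 : z1 <> z2).

Lemma EXP z u : phi (z.1 + u.1, z.2 + u.2) = phi z +
  2 * ((k11 * z.1 + k12 * z.2 + g1) * u.1 + (k12 * z.1 + k22 * z.2 + g2) * u.2) + qK u.
Proof. rewrite /phi /qK /=; ring. Qed.

Lemma QM v : qK (m11 * v.1 + m12 * v.2, m21 * v.1 + m22 * v.2) = ga * qK v.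
Proof.
have h1 := H v; have h2 := H (- v.1, - v.2); have h0 := H (0, 0).
have e1 : Tm v = ((t1, t2).1 + (m11 * v.1 + m12 * v.2, m21 * v.1 + m22 * v.2).1,
                  (t1, t2).2 + (m11 * v.1 + m12 * v.2, m21 * v.1 + m22 * v.2).2).
  by rewrite /Tm /=; apply/pt_eq => /=; split; ring.
have e2 : Tm (- v.1, - v.2) = ((t1, t2).1 + (- (m11 * v.1 + m12 * v.2), - (m21 * v.1 + m22 * v.2)).1,
   (t1, t2).2 + (- (m11 * v.1 + m12 * v.2), - (m21 * v.1 + m22 * v.2)).2).
  by rewrite /Tm /=; apply/pt_eq => /=; split; ring.
have e0 : Tm (0, 0) = (t1, t2) by rewrite /Tm /=; apply/pt_eq => /=; split; ring.
rewrite e1 (EXP (t1, t2)) in h1; rewrite e2 (EXP (t1, t2)) in h2; rewrite e0 in h0.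
have q1 : qK (- (m11 * v.1 + m12 * v.2), - (m21 * v.1 + m22 * v.2)) =
          qK (m11 * v.1 + m12 * v.2, m21 * v.1 + m22 * v.2) by rewrite /qK /=; ring.
rewrite q1 in h2.
have p1 : phi v = phi (0,0) + 2 * (g1 * v.1 + g2 * v.2) + qK v by rewrite /phi /qK /=; ring.
have p2 : phi (- v.1, - v.2) = phi (0,0) - 2 * (g1 * v.1 + g2 * v.2) + qK v by rewrite /phi /qK /=; ring.
rewrite p1 in h1; rewrite p2 in h2.
set X := qK _ in h1 h2 *; set Y := qK v in h1 h2 *.
set G := 2 * _ in h1 h2; set P0 := phi (t1, t2) in h0 h1 h2.
have hG : G = 2 * ((k11 * t1 + k12 * t2 + g1) * (m11 * v.1 + m12 * v.2) +
     (k12 * t1 + k22 * t2 + g2) * (m21 * v.1 + m22 * v.2)) by [].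
move: h1 h2; rewrite /= -/G.
set G2 := 2 * (_ * - _ + _ * - _).
have hG2 : G2 = - G by rewrite /G2 hG; ring.
rewrite hG2 => h1 h2.
have : 2 * X = 2 * (ga * Y).
  transitivity ((P0 + G + X) + (P0 + - G + X) - 2 * P0); first by ring.
  rewrite h1 h2 h0; ring.
by move=> h; lra.
Qed.


Definition X11 := k11 * m11 ^+ 2 + 2 * k12 * m11 * m21 + k22 * m21 ^+ 2.
Definition X22 := k11 * m12 ^+ 2 + 2 * k12 * m12 * m22 + k22 * m22 ^+ 2.
Definition X12 := k11 * m11 * m12 + k12 * (m11 * m22 + m21 * m12) + k22 * m21 * m22.
Definition dl := m11 * m22 - m12 * m21.
Definition dK := k11 * k22 - k12 ^+ 2.

Lemma polX : [/\ X11 = ga * k11, X22 = ga * k22 & X12 = ga * k12].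
Proof.
have h1 := QM (1, 0); have h2 := QM (0, 1); have h3 := QM (1, 1).
rewrite /qK /= in h1 h2 h3.
have e1 : X11 = ga * k11 by apply: (etrans _ (etrans h1 _)); rewrite /X11; ring.
have e2 : X22 = ga * k22 by apply: (etrans _ (etrans h2 _)); rewrite /X22; ring.
split => //.
have e3 : X11 + 2 * X12 + X22 = ga * k11 + 2 * (ga * k12) + ga * k22.
  by apply: (etrans _ (etrans h3 _)); rewrite /X11 /X22 /X12; ring.
lra.
Qed.

Lemma detN : dl ^+ 2 = (1 - k11) * (1 - k22) - k12 ^+ 2.
Proof. rewrite /dl hk11 hk12 hk22; ring. Qed.

Lemma detD2 : (X11 + (1 - k11)) * (X22 + (1 - k22)) - (X12 - k12) ^+ 2 =
   dl ^+ 2 * ((k11 + 1) * (k22 + 1) - k12 ^+ 2).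
Proof. rewrite /X11 /X22 /X12 /dl hk11 hk12 hk22; ring. Qed.

Lemma detD1 : X11 * X22 - X12 ^+ 2 = dl ^+ 2 * dK.
Proof. rewrite /X11 /X22 /X12 /dl /dK; ring. Qed.

Lemma detD3 : (X11 - (1 - k11)) * (X22 - (1 - k22)) - (X12 + k12) ^+ 2 =
   dl ^+ 2 * ((k11 - 1) * (k22 - 1) - k12 ^+ 2).
Proof. rewrite /X11 /X22 /X12 /dl hk11 hk12 hk22; ring. Qed.


Lemma padd_eq (z : R * R) : z = (z.1, z.2). Proof. by case: z. Qed.

Lemma caseK0 : k11 = 0 -> k12 = 0 -> k22 = 0 -> False.
Proof.
move=> h1 h2 h3.
have hu : (z2.1 - z1.1, z2.2 - z1.2) <> (0, 0).
  move/pt_eq => /= [e1 e2]; apply: d12; apply/pt_eq; split; lra.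
apply: (line3 nc hu hz1).
  by have -> : (z1.1 + (z2.1 - z1.1, z2.2 - z1.2).1, z1.2 + (z2.1 - z1.1, z2.2 - z1.2).2) = z2
    by apply/pt_eq => /=; split; ring.
move: hz1 hz2; rewrite /phi h1 h2 h3 /= => e1 e2.
apply: (etrans _ (_ : 2 * (0 * z2.1 ^+ 2 + 2 * 0 * z2.1 * z2.2 + 0 * z2.2 ^+ 2 + 2 * g1 * z2.1 + 2 * g2 * z2.2 + c0)
   - (0 * z1.1 ^+ 2 + 2 * 0 * z1.1 * z1.2 + 0 * z1.2 ^+ 2 + 2 * g1 * z1.1 + 2 * g2 * z1.2 + c0) = 0)).
  by ring.
by rewrite e1 e2; ring.
Qed.

Section DK.
Hypothesis hdK : dK != 0.
Definition o1 := - (k22 * g1 - k12 * g2) / dK.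
Definition o2 := - (k11 * g2 - k12 * g1) / dK.
Lemma grad0 : k11 * o1 + k12 * o2 + g1 = 0 /\ k12 * o1 + k22 * o2 + g2 = 0.
Proof. have h := hdK; rewrite /dK in h; by rewrite /o1 /o2 /dK; split; field. Qed.

Lemma phio u : phi ((o1, o2).1 + u.1, (o1, o2).2 + u.2) = phi (o1, o2) + qK u.
Proof. by rewrite EXP /=; case: grad0 => -> ->; ring. Qed.

Lemma phi_rel z : phi z = phi (o1, o2) + qK (z.1 - o1, z.2 - o2).
Proof.
rewrite -phio /=; congr phi; apply/pt_eq => /=; split; ring.
Qed.

Lemma caseDK_c0 : phi (o1, o2) = 0 -> False.
Proof.
move=> hc.
case: (ltrgt0P dK) => [hpos|hneg|]; last by move/eqP: hdK.
-
  have hk : k11 != 0.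
    apply/eqP => h; move: hpos; rewrite /dK h mul0r sub0r oppr_gt0 ltNge => /negP; apply.
    by rewrite sqr_ge0.
  have zero : forall v, qK v = 0 -> v = (0, 0).
    move=> [v1 v2] /= hv.
    have : (k11 * v1 + k12 * v2) ^+ 2 + dK * v2 ^+ 2 = 0.
      by rewrite -[RHS](mulr0 k11) -hv /qK /dK /=; ring.
    move=> h.
    have h1 : (k11 * v1 + k12 * v2) ^+ 2 = 0.
      have := sqr_ge0 (k11 * v1 + k12 * v2); have := sqr_ge0 v2.
      move=> a b; apply/eqP; rewrite eq_le b andbT.
      have : 0 <= dK * v2 ^+ 2 by rewrite mulr_ge0 // ltW.
      move=> c; lra.
    have h2 : v2 = 0.
      have : dK * v2 ^+ 2 = 0 by lra.
      move/mul_eq0_r => /(_ hdK) /eqP; rewrite expf_eq0 /= => /eqP //.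
    have h3 : v1 = 0.
      rewrite h2 mulr0 addr0 in h1.
      apply: (mul_eq0_r (a := k11)) => //; move/eqP: h1; rewrite expf_eq0 /= => /eqP //.
    by rewrite h2 h3.
  have e1 := phi_rel z1; have e2 := phi_rel z2.
  rewrite hz1 hc add0r in e1; rewrite hz2 hc add0r in e2.
  move: (zero _ (esym e1)) (zero _ (esym e2)) => /pt_eq /= [a1 a2] /pt_eq /= [b1 b2].
  apply: d12; apply/pt_eq; split; lra.
- (* indefinite: isotropic vector *)
  have [u [hu qu]] : exists u : R * R, u <> (0, 0) /\ qK u = 0.
    case: (eqVneq k11 0) => hk.
      by exists (1, 0); split; [move/pt_eq => /= [] /eqP; rewrite oner_eq0|rewrite /qK hk /=; ring].
    exists (- k12 + Num.sqrt (- dK), k11); split.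
      by move/pt_eq => /= [_ h]; move/eqP: hk.
    have hs : Num.sqrt (- dK) ^+ 2 = - dK by rewrite sqr_sqrtr // oppr_ge0 ltW.
    apply: (mul_eq0_r (a := k11 ^+ 2)); last by rewrite expf_eq0.
    transitivity (k11 ^+ 3 * (Num.sqrt (- dK) ^+ 2 + dK)); first by rewrite /qK /dK /=; ring.
    by rewrite hs; ring.
  apply: (line3 nc hu (P := (o1, o2))).
  - by rewrite -hc.
  - by rewrite phio hc qu; ring.
  - have -> : ((o1, o2).1 + 2 * u.1, (o1, o2).2 + 2 * u.2) =
       ((o1, o2).1 + (2 * u.1, 2 * u.2).1, (o1, o2).2 + (2 * u.1, 2 * u.2).2) by [].
    rewrite phio hc.
    have -> : qK (2 * u.1, 2 * u.2) = 4 * qK u by rewrite /qK /=; ring.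
    by rewrite qu; ring.
Qed.

Lemma caseDK_c1 : phi (o1, o2) != 0 -> False.
Proof.
move=> hc.
pose To := Tm (o1, o2).
pose G1 := k11 * To.1 + k12 * To.2 + g1.
pose G2 := k12 * To.1 + k22 * To.2 + g2.
have Gv : forall v : R * R, G1 * (m11 * v.1 + m12 * v.2) + G2 * (m21 * v.1 + m22 * v.2) = 0.
  move=> v.
  have h1 := H ((o1, o2).1 + v.1, (o1, o2).2 + v.2).
  have h2 := H ((o1, o2).1 + (- v.1, - v.2).1, (o1, o2).2 + (- v.1, - v.2).2).
  rewrite !phio in h1 h2.
  have e1 : Tm ((o1, o2).1 + v.1, (o1, o2).2 + v.2) = (To.1 + (m11 * v.1 + m12 * v.2, m21 * v.1 + m22 * v.2).1,
     To.2 + (m11 * v.1 + m12 * v.2, m21 * v.1 + m22 * v.2).2).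
    by rewrite /To /Tm; apply/pt_eq => /=; split; ring.
  have e2 : Tm ((o1, o2).1 + (- v.1, - v.2).1, (o1, o2).2 + (- v.1, - v.2).2) =
    (To.1 + (- (m11 * v.1 + m12 * v.2), - (m21 * v.1 + m22 * v.2)).1,
     To.2 + (- (m11 * v.1 + m12 * v.2), - (m21 * v.1 + m22 * v.2)).2).
    by rewrite /To /Tm; apply/pt_eq => /=; split; ring.
  rewrite e1 EXP in h1; rewrite e2 EXP in h2.
  have q1 : qK (- v.1, - v.2) = qK v by rewrite /qK /=; ring.
  have q2 : qK (- (m11 * v.1 + m12 * v.2), - (m21 * v.1 + m22 * v.2)) =
     qK (m11 * v.1 + m12 * v.2, m21 * v.1 + m22 * v.2) by rewrite /qK /=; ring.
  rewrite q1 q2 -/G1 -/G2 /= in h2; rewrite -/G1 -/G2 /= in h1.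
  set A := G1 * _ + G2 * _; set Q := qK _ in h1 h2.
  have hA : 2 * (G1 * - (m11 * v.1 + m12 * v.2) + G2 * - (m21 * v.1 + m22 * v.2)) = - (2 * A)
    by rewrite /A; ring.
  rewrite hA in h2.
  have : 4 * A = 0 by lra.
  by move=> h; lra.
have g1' := Gv (1, 0); have g2' := Gv (0, 1); rewrite /= in g1' g2'.
have [hG1 hG2] : G1 = 0 /\ G2 = 0.
  apply: (solve2 (a := m11) (b := m21) (c := m12) (d := m22)).
  - by move: hdet; rewrite mulrC [m21 * _]mulrC.
  - by rewrite mulrC [m21 * _]mulrC; move: g1'; rewrite !mulr1 !mulr0 !addr0.
  - by rewrite mulrC [m22 * _]mulrC; move: g2'; rewrite !mulr1 !mulr0 !add0r.
have [e1 e2] : To.1 - o1 = 0 /\ To.2 - o2 = 0.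
  case: grad0 => gr1 gr2.
  apply: (solve2 (a := k11) (b := k12) (c := k12) (d := k22)).
  - by move: hdK; rewrite /dK expr2.
  - by rewrite -[RHS]hG1 -[RHS](subr0 G1) -[X in G1 - X]gr1 /G1; ring.
  - by rewrite -[RHS]hG2 -[RHS](subr0 G2) -[X in G2 - X]gr2 /G2; ring.
have hTo : Tm (o1, o2) = (o1, o2) by apply/pt_eq; split; apply/eqP; rewrite -subr_eq0; apply/eqP; [exact: e1|exact: e2].
have hga : ga = 1.
  have := H (o1, o2); rewrite hTo => h.
  apply/eqP; rewrite -subr_eq0; apply/eqP; apply: (mul_eq0_l (b := phi (o1, o2))) => //.
  by rewrite mulrBl -h; ring.
case: polX; rewrite hga !mul1r => x11 x22 x12.
have hdl : dl ^+ 2 = 1.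
  have := detD1; rewrite x11 x22 x12 -/dK => h.
  apply/eqP; rewrite -subr_eq0; apply/eqP; apply: (mul_eq0_l (b := dK)) => //.
  by rewrite mulrBl -h; ring.
have E2 := detD2; rewrite x11 x22 x12 hdl mul1r in E2.
have E3 := detD3; rewrite x11 x22 x12 hdl mul1r in E3.
have E2' : k11 * k22 - k12 ^+ 2 + k11 + k22 = 0.
  transitivity (((k11 + 1) * (k22 + 1) - k12 ^+ 2) -
     ((k11 + (1 - k11)) * (k22 + (1 - k22)) - (k12 - k12) ^+ 2)); first by ring.
  by rewrite E2 subrr.
have E3' : 3 * (k11 * k22 - k12 ^+ 2) - k11 - k22 = 0.
  transitivity (((k11 - (1 - k11)) * (k22 - (1 - k22)) - (k12 + k12) ^+ 2) -
     ((k11 - 1) * (k22 - 1) - k12 ^+ 2)); first by ring.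
  by rewrite E3 subrr.
have : dK = 0 by rewrite /dK; lra.
by move/eqP: hdK.
Qed.
End DK.


Section R1.
Hypothesis hdK0 : dK = 0.
Hypothesis hK : ~ [/\ k11 = 0, k12 = 0 & k22 = 0].

Lemma ker_of_q (x : R * R) : qK x = 0 -> k11 * x.1 + k12 * x.2 = 0 /\ k12 * x.1 + k22 * x.2 = 0.
Proof.
case: x => x1 x2 /= hq.
have hd : k11 * k22 = k12 ^+ 2 by move: hdK0; rewrite /dK => /eqP; rewrite subr_eq0 => /eqP.
have i1 : k11 * qK (x1, x2) = (k11 * x1 + k12 * x2) ^+ 2 + dK * x2 ^+ 2 by rewrite /qK /dK /=; ring.
have i2 : k22 * qK (x1, x2) = (k12 * x1 + k22 * x2) ^+ 2 + dK * x1 ^+ 2 by rewrite /qK /dK /=; ring.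
rewrite hq hdK0 !mulr0 !mul0r !addr0 in i1 i2.
split.
  case: (eqVneq k11 0) => h.
    have : k12 ^+ 2 = 0 by rewrite -hd h mul0r.
    by move/sq0 => ->; rewrite h; ring.
  by apply: sq0; rewrite -i1.
case: (eqVneq k22 0) => h.
  have : k12 ^+ 2 = 0 by rewrite -hd h mulr0.
  by move/sq0 => ->; rewrite h; ring.
by apply: sq0; rewrite -i2.
Qed.

Lemma caseR1 : False.
Proof.
have [w [hw [kw1 [kw2 kcr]]]] : exists w : R * R, w <> (0, 0) /\ k11 * w.1 + k12 * w.2 = 0 /\
    k12 * w.1 + k22 * w.2 = 0 /\ forall x : R * R, k11 * x.1 + k12 * x.2 = 0 ->
    k12 * x.1 + k22 * x.2 = 0 -> w.1 * x.2 - w.2 * x.1 = 0.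
  have hd : k11 * k22 = k12 ^+ 2 by move: hdK0; rewrite /dK => /eqP; rewrite subr_eq0 => /eqP.
  have gen : (k11, k12) != (0, 0) -> exists w : R * R, w <> (0, 0) /\ k11 * w.1 + k12 * w.2 = 0 /\
    k12 * w.1 + k22 * w.2 = 0 /\ forall x : R * R, k11 * x.1 + k12 * x.2 = 0 ->
    k12 * x.1 + k22 * x.2 = 0 -> w.1 * x.2 - w.2 * x.1 = 0.
    move=> hne; exists (- k12, k11); split.
      move/pt_eq => /= [a b]; have a' : k12 = 0 by lra.
      by move: hne; rewrite a' b eqxx.
    split; first by rewrite /=; ring.
    split; first by rewrite /= [k22 * _]mulrC hd; ring.
    by move=> x hx _ /=; rewrite -[RHS]oppr0 -hx; ring.
  case: (eqVneq (k11, k12) (0, 0)) => hne; last exact: gen.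
  case: hne => h11 h12.
  exists (- k22, k12); split.
    move/pt_eq => /= [a b]; apply: hK; split => //; lra.
  split; first by rewrite h11 h12 /=; ring.
  split; first by rewrite h12 /=; ring.
  by move=> x _ hx /=; rewrite -[RHS]oppr0 -hx; ring.
have along : forall (z : R * R) s, phi (z.1 + s * w.1, z.2 + s * w.2) = phi z + 2 * s * (g1 * w.1 + g2 * w.2).
  move=> z s0.
  have -> : (z.1 + s0 * w.1, z.2 + s0 * w.2) = (z.1 + (s0 * w.1, s0 * w.2).1, z.2 + (s0 * w.1, s0 * w.2).2) by [].
  rewrite EXP.
  transitivity (phi z + 2 * s0 * (z.1 * (k11 * w.1 + k12 * w.2) + z.2 * (k12 * w.1 + k22 * w.2) +
     (g1 * w.1 + g2 * w.2)) + s0 ^+ 2 * (w.1 * (k11 * w.1 + k12 * w.2) + w.2 * (k12 * w.1 + k22 * w.2))).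
    by rewrite /qK /=; ring.
  by rewrite kw1 kw2; ring.
have qw : qK w = 0.
  transitivity (w.1 * (k11 * w.1 + k12 * w.2) + w.2 * (k12 * w.1 + k22 * w.2)); first by rewrite /qK; ring.
  by rewrite kw1 kw2; ring.
have gw : g1 * w.1 + g2 * w.2 != 0.
  apply/eqP => gw0; apply: (line3 nc hw hz1).
    by rewrite -[w.1]mul1r -[w.2]mul1r along gw0 hz1; ring.
  by rewrite along gw0 hz1; ring.
pose Mw := (m11 * w.1 + m12 * w.2, m21 * w.1 + m22 * w.2).
have qMw : qK Mw = 0 by rewrite /Mw QM qw mulr0.
have [km1 km2] := ker_of_q qMw.
have gMw : g1 * Mw.1 + g2 * Mw.2 = ga * (g1 * w.1 + g2 * w.2).
  have h1 := H w; have h0 := H (0, 0).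
  have e0 : Tm (0, 0) = (t1, t2) by rewrite /Tm; apply/pt_eq => /=; split; ring.
  have e1 : Tm w = ((t1, t2).1 + Mw.1, (t1, t2).2 + Mw.2) by rewrite /Tm; apply/pt_eq => /=; split; ring.
  rewrite e0 in h0; rewrite e1 EXP in h1.
  have ew : w = (((0, 0) : R * R).1 + 1 * w.1, ((0, 0) : R * R).2 + 1 * w.2) by apply/pt_eq => /=; split; ring.
  rewrite [in RHS]ew along qMw h0 in h1.
  have h1' : ga * phi (0, 0) + 2 * (t1 * (k11 * Mw.1 + k12 * Mw.2) + t2 * (k12 * Mw.1 + k22 * Mw.2) +
     (g1 * Mw.1 + g2 * Mw.2)) = ga * phi (0, 0) + 2 * (ga * (g1 * w.1 + g2 * w.2)).
    by apply: (etrans _ (etrans h1 _)); rewrite /=; ring.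
  by rewrite km1 km2 !mulr0 !add0r in h1'; lra.
have hn : w.1 ^+ 2 + w.2 ^+ 2 != 0.
  have := pt_neq hw; case=> /= h; apply/eqP => /sumsq_eq0 [a b]; move/eqP: h; apply.
    exact: a. exact: b.
have cr := kcr Mw km1 km2.
pose sg := (w.1 * Mw.1 + w.2 * Mw.2) / (w.1 ^+ 2 + w.2 ^+ 2).
have s1 : Mw.1 = sg * w.1.
  apply/eqP; rewrite -subr_eq0; apply/eqP.
  transitivity (- w.2 * (w.1 * Mw.2 - w.2 * Mw.1) / (w.1 ^+ 2 + w.2 ^+ 2)); first by rewrite /sg; field.
  by rewrite cr; ring.
have s2 : Mw.2 = sg * w.2.
  apply/eqP; rewrite -subr_eq0; apply/eqP.
  transitivity (w.1 * (w.1 * Mw.2 - w.2 * Mw.1) / (w.1 ^+ 2 + w.2 ^+ 2)); first by rewrite /sg; field.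
  by rewrite cr; ring.
have hsg : sg = ga.
  apply/eqP; rewrite -subr_eq0; apply/eqP; apply: (mul_eq0_l (b := g1 * w.1 + g2 * w.2)) => //.
  transitivity ((g1 * Mw.1 + g2 * Mw.2) - ga * (g1 * w.1 + g2 * w.2)); first by rewrite s1 s2; ring.
  by rewrite gMw subrr.
have nMw : Mw.1 ^+ 2 + Mw.2 ^+ 2 = w.1 ^+ 2 + w.2 ^+ 2 - qK w.
  by rewrite /Mw /qK hk11 hk12 hk22 /=; ring.
rewrite qw subr0 s1 s2 hsg in nMw.
have ga2 : ga ^+ 2 = 1.
  apply/eqP; rewrite -subr_eq0; apply/eqP; apply: (mul_eq0_l (b := w.1 ^+ 2 + w.2 ^+ 2)) => //.
  transitivity (((ga * w.1) ^+ 2 + (ga * w.2) ^+ 2) - (w.1 ^+ 2 + w.2 ^+ 2)); first by ring.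
  by rewrite nMw subrr.
case: polX => x11 x22 x12.
have E2 := detD2; rewrite x11 x22 x12 detN in E2.
have ht : k11 + k22 != 0.
  apply/eqP => ht; apply: hK.
  have hk2 : k22 = - k11 by lra.
  have : k11 ^+ 2 + k12 ^+ 2 = 0.
    by move: hdK0; rewrite /dK hk2 => h; rewrite -[RHS]oppr0 -h; ring.
  by case/sumsq_eq0 => a b; split => //; rewrite hk2 a oppr0.
have E2' : (k11 + k22) * (ga - 1 + (k11 + k22)) = 0.
  transitivity (((ga * k11 + (1 - k11)) * (ga * k22 + (1 - k22)) - (ga * k12 - k12) ^+ 2) -
    ((1 - k11) * (1 - k22) - k12 ^+ 2) * ((k11 + 1) * (k22 + 1) - k12 ^+ 2) - (ga - 1) ^+ 2 * dK
    + (2 + dK) * dK).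
    by rewrite /dK; ring.
  by rewrite E2 hdK0; ring.
have hg : ga = 1 - (k11 + k22).
  have := mul_eq0_r E2' ht; lra.
have gpos : 0 <= ga.
  have := detN; rewrite -[(1 - k11) * (1 - k22) - k12 ^+ 2](_ : 1 - (k11 + k22) + dK = _); last by rewrite /dK; ring.
  by rewrite hdK0 addr0 -hg => <-; rewrite sqr_ge0.
have : ga = 1.
  have : (ga - 1) * (ga + 1) = 0 by rewrite -[RHS](subrr 1) -[X in _ = X - _]ga2; ring.
  move/eqP; rewrite mulf_eq0 => /orP [/eqP|/eqP] h; first lra.
  lra.
move=> h1; move/eqP: ht; apply; lra.
Qed.

End R1.

Lemma alg_false : False.
Proof.
case: (eqVneq dK 0) => hd.
  case: (boolP [&& k11 == 0, k12 == 0 & k22 == 0]) => [/and3P [/eqP a /eqP b /eqP c]|hK].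
    exact: caseK0 a b c.
  apply: (caseR1 hd) => -[a b c]; move: hK; rewrite a b c !eqxx.
  by [].
case: (eqVneq (phi (o1, o2)) 0) => hc; first exact: caseDK_c0 hd hc.
exact: caseDK_c1 hd hc.
Qed.
End ALG.
End B.

Section C.
Variable R : realType.

Definition d2 (u v : R * R) := (u.1 - v.1) ^+ 2 + (u.2 - v.2) ^+ 2.

Definition qcomp (q : quad R) (m11 m12 m21 m22 t1 t2 : R) : quad R :=
  let A := qa q in let B := qb q in let C := qc q in let D := qd q in let E := qe q in
  Quad (A * m11 ^+ 2 + B * m11 * m21 + C * m21 ^+ 2)
       (2 * A * m11 * m12 + B * (m11 * m22 + m12 * m21) + 2 * C * m21 * m22)
       (A * m12 ^+ 2 + B * m12 * m22 + C * m22 ^+ 2)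
       (2 * A * m11 * t1 + B * (m11 * t2 + m21 * t1) + 2 * C * m21 * t2 + D * m11 + E * m21)
       (2 * A * m12 * t1 + B * (m12 * t2 + m22 * t1) + 2 * C * m22 * t2 + D * m12 + E * m22)
       (A * t1 ^+ 2 + B * t1 * t2 + C * t2 ^+ 2 + D * t1 + E * t2 + qf q).

Lemma qcompE q m11 m12 m21 m22 t1 t2 z :
  qev (qcomp q m11 m12 m21 m22 t1 t2) z = qev q (Tm m11 m12 m21 m22 t1 t2 z).
Proof. by case: q => A B C D E F; rewrite /qcomp /qev /Tm /=; ring. Qed.

Definition qd2 (c : R * R) := Quad 1 0 1 (-2 * c.1) (-2 * c.2) (c.1 ^+ 2 + c.2 ^+ 2).
Lemma qd2E c z : qev (qd2 c) z = d2 z c.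
Proof. rewrite /qev /qd2 /d2 /=; ring. Qed.


Section TG.
Variables (f : quad R) (Pi Pj Pk Pl : R * R) (m11 m12 m21 m22 t1 t2 : R).
Local Notation T := (Tm m11 m12 m21 m22 t1 t2).
Hypothesis nc : noncol (fun z => qev f z = 0).
Hypothesis hd1 : d2 Pi Pk != d2 Pj Pl.
Hypothesis hcirc : ~ exists r, 0 < r /\ forall z, qev f z = 0 <-> d2 z Pi = r ^+ 2.
Hypothesis HL : forall z, d2 z Pi - d2 (T z) Pj = d2 z Pk - d2 (T z) Pl.
Variables z1 z2 z3 z4 z5 : R * R.
Hypotheses (d12 : z1 <> z2) (d13 : z1 <> z3) (d14 : z1 <> z4) (d15 : z1 <> z5)
  (d23 : z2 <> z3) (d24 : z2 <> z4) (d25 : z2 <> z5) (d34 : z3 <> z4) (d35 : z3 <> z5) (d45 : z4 <> z5).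
Hypotheses (f1 : qev f z1 = 0) (f2 : qev f z2 = 0) (f3 : qev f z3 = 0) (f4 : qev f z4 = 0) (f5 : qev f z5 = 0).
Hypotheses (g1 : qev f (T z1) = 0) (g2 : qev f (T z2) = 0) (g3 : qev f (T z3) = 0)
  (g4 : qev f (T z4) = 0) (g5 : qev f (T z5) = 0).
Hypotheses (e1 : d2 z1 Pi = d2 (T z1) Pj) (e2 : d2 z2 Pi = d2 (T z2) Pj) (e3 : d2 z3 Pi = d2 (T z3) Pj)
  (e4 : d2 z4 Pi = d2 (T z4) Pj) (e5 : d2 z5 Pi = d2 (T z5) Pj).

Definition qphi := qlin (qd2 Pi) 1 (qcomp (qd2 Pj) m11 m12 m21 m22 t1 t2).
Lemma qphiE z : qev qphi z = d2 z Pi - d2 (T z) Pj.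
Proof. by rewrite /qphi qlinE qcompE !qd2E mul1r. Qed.

Lemma Tgen : False.
Proof.
have [ga hga] : exists ga, forall z, qev (qcomp f m11 m12 m21 m22 t1 t2) z = ga * qev f z.
  by apply: (five nc f1 f2 f3 f4 f5 d12 d13 d14 d15 d23 d24 d25 d34 d35 d45); rewrite qcompE.
have [mu hmu] : exists mu, forall z, qev qphi z = mu * qev f z.
  apply: (five nc f1 f2 f3 f4 f5 d12 d13 d14 d15 d23 d24 d25 d34 d35 d45); rewrite qphiE;
  by apply/eqP; rewrite subr_eq0; apply/eqP.
have hfT : forall z, qev f (T z) = ga * qev f z by move=> z; rewrite -qcompE hga.
have hphi : forall z, d2 z Pi - d2 (T z) Pj = mu * qev f z by move=> z; rewrite -qphiE hmu.
case: (eqVneq mu 0) => hmu0.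
  have h := hphi Pk; rewrite hmu0 mul0r HL in h.
  have hk0 : d2 Pk Pk = 0 by rewrite /d2; ring.
  rewrite hk0 sub0r in h.
  have hTk : d2 (T Pk) Pl = 0 by lra.
  have [a b] := sumsq_eq0 hTk.
  have h' := hphi Pk; rewrite hmu0 mul0r in h'.
  move/eqP: hd1; apply.
  have -> : d2 Pi Pk = d2 Pk Pi by rewrite /d2; ring.
  have -> : d2 Pj Pl = d2 (T Pk) Pj.
    have h1' : (T Pk).1 = Pl.1 by lra.
    have h2' : (T Pk).2 = Pl.2 by lra.
    by rewrite /d2 h1' h2'; ring.
  lra.
have Zeq : forall z, qev f z = 0 <-> d2 z Pi - d2 (T z) Pj = 0.
  move=> z; rewrite hphi; split => [->|]; first by rewrite mulr0.
  by move/eqP; rewrite mulf_eq0 (negbTE hmu0) /= => /eqP.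
case: (eqVneq ga 0) => hga0.
  have fT0 : forall z, qev f (T z) = 0 by move=> z; rewrite hfT hga0 mul0r.
  case: (boolP ((m11, m21) != (0, 0))) => hM1.
    apply: (line3 nc (P := (t1, t2)) (u := (m11, m21))).
    - by move/eqP: hM1.
    - by have := fT0 (0, 0); rewrite /Tm /= !mulr0 !add0r.
    - by have := fT0 (1, 0); rewrite /Tm /= !mulr0 !mulr1 !addr0 [t1 + _]addrC [t2 + _]addrC.
    - by have := fT0 (2, 0); rewrite /Tm /= !mulr0 !addr0 [t1 + _]addrC [t2 + _]addrC [2 * m11]mulrC [2 * m21]mulrC.
  case: (boolP ((m12, m22) != (0, 0))) => hM2.
    apply: (line3 nc (P := (t1, t2)) (u := (m12, m22))).
    - by move/eqP: hM2.
    - by have := fT0 (0, 0); rewrite /Tm /= !mulr0 !add0r.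
    - by have := fT0 (0, 1); rewrite /Tm /= !mulr0 !mulr1 !add0r [t1 + _]addrC [t2 + _]addrC.
    - by have := fT0 (0, 2); rewrite /Tm /= !mulr0 !add0r [t1 + _]addrC [t2 + _]addrC [2 * m12]mulrC [2 * m22]mulrC.
  move: hM1 hM2; rewrite !negbK !xpair_eqE => /andP [/eqP h11 /eqP h21] /andP [/eqP h12 /eqP h22].
  have TE : forall z, T z = (t1, t2) by move=> z; rewrite /Tm h11 h12 h21 h22; apply/pt_eq => /=; split; ring.
  have hz1 : d2 z1 Pi = d2 (t1, t2) Pj by rewrite e1 TE.
  have hz2 : d2 z2 Pi = d2 (t1, t2) Pj by rewrite e2 TE.
  have rpos : 0 < d2 (t1, t2) Pj.
    rewrite lt_def; apply/andP; split; last by rewrite /d2 addr_ge0 // sqr_ge0.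
    apply/eqP => h0; rewrite h0 in hz1 hz2.
    have [a b] := sumsq_eq0 hz1; have [c d] := sumsq_eq0 hz2.
    apply: d12; apply/pt_eq; split; lra.
  apply: hcirc; exists (Num.sqrt (d2 (t1, t2) Pj)); split; first by rewrite sqrtr_gt0.
  move=> z; rewrite sqr_sqrtr ?ltW // Zeq TE; split => h; lra.
case: (eqVneq (m11 * m22 - m12 * m21) 0) => hdet.
  have [k [hk [k1 k2]]] : exists k : R * R, k <> (0, 0) /\ m11 * k.1 + m12 * k.2 = 0 /\ m21 * k.1 + m22 * k.2 = 0.
    case: (boolP ((- m12, m11) != (0, 0))) => ha.
      exists (- m12, m11); split; first by move/eqP: ha.
      by split; rewrite /=; [ring|rewrite -[RHS]hdet; ring].
    case: (boolP ((- m22, m21) != (0, 0))) => hb.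
      exists (- m22, m21); split; first by move/eqP: hb.
      by split; rewrite /=; [rewrite -[RHS]oppr0 -hdet; ring|ring].
    move: ha hb; rewrite !negbK !xpair_eqE => /andP [/eqP a /eqP b] /andP [/eqP c /eqP d].
    exists (1, 0); split; first by move/pt_eq => /= [] /eqP; rewrite oner_eq0.
    split => /=; lra.
  have along : forall s, qev f (z1.1 + s * k.1, z1.2 + s * k.2) = 0.
    move=> s; apply: (mul_eq0_r (a := ga)) => //.
    rewrite -hfT.
    have -> : T (z1.1 + s * k.1, z1.2 + s * k.2) = T z1.
      rewrite /Tm /=; apply/pt_eq => /=; split.
        by rewrite -[RHS]addr0 -[X in _ = _ + X](mulr0 s) -k1; ring.
      by rewrite -[RHS]addr0 -[X in _ = _ + X](mulr0 s) -k2; ring.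
    exact: g1.
  apply: (line3 nc hk f1).
    by have := along 1; rewrite !mul1r.
  exact: along.
pose u1 := t1 - Pj.1; pose u2 := t2 - Pj.2.
pose G1 := - Pi.1 - (m11 * u1 + m21 * u2).
pose G2 := - Pi.2 - (m12 * u1 + m22 * u2).
pose C0 := Pi.1 ^+ 2 + Pi.2 ^+ 2 - u1 ^+ 2 - u2 ^+ 2.
pose K11 := 1 - m11 ^+ 2 - m21 ^+ 2.
pose K12 := - (m11 * m12 + m21 * m22).
pose K22 := 1 - m12 ^+ 2 - m22 ^+ 2.
have phiE : forall z, phi G1 G2 C0 K11 K12 K22 z = d2 z Pi - d2 (T z) Pj.
  by move=> z; rewrite /phi /d2 /Tm /G1 /G2 /C0 /K11 /K12 /K22 /u1 /u2 /=; ring.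
have Zeq' : forall z, qev f z = 0 <-> phi G1 G2 C0 K11 K12 K22 z = 0 by move=> z; rewrite phiE Zeq.
have HH : forall z, phi G1 G2 C0 K11 K12 K22 (T z) = ga * phi G1 G2 C0 K11 K12 K22 z.
  by move=> z; rewrite !phiE !hphi hfT; ring.
have NC : noncol (fun z => phi G1 G2 C0 K11 K12 K22 z = 0).
  by move=> a b c ha hb hc; apply: nc; rewrite Zeq'.
have hz1 : phi G1 G2 C0 K11 K12 K22 z1 = 0 by rewrite -Zeq'.
have hz2 : phi G1 G2 C0 K11 K12 K22 z2 = 0 by rewrite -Zeq'.
exact: (alg_false (erefl K11) (erefl K12) (erefl K22) hdet HH NC hz1 hz2 d12).
Qed.
End TG.
End C.

Section D.
Variable R : realType.
Variables (f : quad R) (Pi Pj Pk Pl Pu Pw : R * R).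

Definition sol (z z' : R * R) := [/\ qev f z = 0, qev f z' = 0, d2 z Pi = d2 z' Pj,
  d2 z Pk = d2 z' Pl & d2 z Pu = d2 z' Pw].

Definition sqn (p : R * R) := p.1 ^+ 2 + p.2 ^+ 2.
Definition dot (p q : R * R) := p.1 * q.1 + p.2 * q.2.
Definition c1 := (sqn Pk - sqn Pi - sqn Pl + sqn Pj) / 2.
Definition c2 := (sqn Pu - sqn Pi - sqn Pw + sqn Pj) / 2.

Lemma linid (P Q P' Q' z w : R * R) :
  (d2 z P - d2 z Q) - (d2 w P' - d2 w Q') =
  2 * (dot (psub Q P) z - dot (psub Q' P') w - (sqn Q - sqn P - sqn Q' + sqn P') / 2).
Proof. by rewrite /d2 /dot /psub /sqn /=; field. Qed.

Lemma lin1 z z' : sol z z' -> dot (psub Pk Pi) z - dot (psub Pl Pj) z' = c1.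
Proof.
case=> _ _ h1 h2 _; have := linid Pi Pk Pj Pl z z'; rewrite h1 h2 subrr => h.
have : dot (psub Pk Pi) z - dot (psub Pl Pj) z' - c1 = 0.
  by apply: (mul_eq0_r (esym h)); rewrite pnatr_eq0.
by move/eqP; rewrite subr_eq0 => /eqP.
Qed.

Lemma lin2 z z' : sol z z' -> dot (psub Pu Pi) z - dot (psub Pw Pj) z' = c2.
Proof.
case=> _ _ h1 _ h2; have := linid Pi Pu Pj Pw z z'; rewrite h1 h2 subrr => h.
have : dot (psub Pu Pi) z - dot (psub Pw Pj) z' - c2 = 0.
  by apply: (mul_eq0_r (esym h)); rewrite pnatr_eq0.
by move/eqP; rewrite subr_eq0 => /eqP.
Qed.


Definition circ_ok (c : R * R) := ~ exists r, 0 < r /\ forall z, qev f z = 0 <-> d2 z c = r ^+ 2.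

Section TC.
Hypothesis nc : noncol (fun z => qev f z = 0).
Hypothesis hd1 : d2 Pi Pk != d2 Pj Pl.
Hypothesis hcI : circ_ok Pi.
Let b := psub Pl Pj.
Let bb := psub Pw Pj.
Let a := psub Pk Pi.
Let aa := psub Pu Pi.
Hypothesis hB : b.1 * bb.2 - b.2 * bb.1 != 0.
Let De := b.1 * bb.2 - b.2 * bb.1.
Let M11 := (bb.2 * a.1 - b.2 * aa.1) / De.
Let M12 := (bb.2 * a.2 - b.2 * aa.2) / De.
Let T1 := (- bb.2 * c1 + b.2 * c2) / De.
Let M21 := (- bb.1 * a.1 + b.1 * aa.1) / De.
Let M22 := (- bb.1 * a.2 + b.1 * aa.2) / De.
Let T2 := (bb.1 * c1 - b.1 * c2) / De.

Lemma solT z z' : sol z z' -> z' = Tm M11 M12 M21 M22 T1 T2 z.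
Proof.
move=> hs; have l1 := lin1 hs; have l2 := lin2 hs.
have hB' : De != 0 by [].
move: l1 l2 hB'; rewrite /dot /Tm /M11 /M12 /M21 /M22 /T1 /T2 /De /a /b /aa /bb /psub /= => l1 l2 hB'.
apply/pt_eq => /=; split.
  apply: (mulfI hB').
  transitivity ((Pw.2 - Pj.2) * ((Pk.1 - Pi.1) * z.1 + (Pk.2 - Pi.2) * z.2 - c1) -
                (Pl.2 - Pj.2) * ((Pu.1 - Pi.1) * z.1 + (Pu.2 - Pi.2) * z.2 - c2)).
    by rewrite -l1 -l2; ring.
  by field.
apply: (mulfI hB').
transitivity (- (Pw.1 - Pj.1) * ((Pk.1 - Pi.1) * z.1 + (Pk.2 - Pi.2) * z.2 - c1) +
              (Pl.1 - Pj.1) * ((Pu.1 - Pi.1) * z.1 + (Pu.2 - Pi.2) * z.2 - c2)).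
  by rewrite -l1 -l2; ring.
by field.
Qed.

Lemma HLT z : d2 z Pi - d2 (Tm M11 M12 M21 M22 T1 T2 z) Pj =
              d2 z Pk - d2 (Tm M11 M12 M21 M22 T1 T2 z) Pl.
Proof.
apply/eqP; rewrite -subr_eq0 [X in X == 0](_ : _ = (d2 z Pi - d2 z Pk) -
   (d2 (Tm M11 M12 M21 M22 T1 T2 z) Pj - d2 (Tm M11 M12 M21 M22 T1 T2 z) Pl)); last by ring.
rewrite linid.
have hB' : De != 0 by [].
move: hB'; rewrite /dot /Tm /M11 /M12 /M21 /M22 /T1 /T2 /c1 /De /a /b /aa /bb /psub /= => hB'.
by apply/eqP; field; exact: hB'.
Qed.

Lemma Tcase (p1 p2 p3 p4 p5 : (R * R) * (R * R)) :
  sol p1.1 p1.2 -> sol p2.1 p2.2 -> sol p3.1 p3.2 -> sol p4.1 p4.2 -> sol p5.1 p5.2 ->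
  p1 <> p2 -> p1 <> p3 -> p1 <> p4 -> p1 <> p5 -> p2 <> p3 -> p2 <> p4 -> p2 <> p5 ->
  p3 <> p4 -> p3 <> p5 -> p4 <> p5 -> False.
Proof.
move=> s1 s2 s3 s4 s5 d12 d13 d14 d15 d23 d24 d25 d34 d35 d45.
have dz : forall p q : (R * R) * (R * R), sol p.1 p.2 -> sol q.1 q.2 -> p <> q -> p.1 <> q.1.
  move=> [x x'] [y y'] /= hp hq hne e; apply: hne.
  by rewrite (solT hp) (solT hq) e.
have [_ _ e1 _ _] := s1; have [_ _ e2 _ _] := s2; have [_ _ e3 _ _] := s3.
have [_ _ e4 _ _] := s4; have [_ _ e5 _ _] := s5.
have [f1 g1 _ _ _] := s1; have [f2 g2 _ _ _] := s2; have [f3 g3 _ _ _] := s3.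
have [f4 g4 _ _ _] := s4; have [f5 g5 _ _ _] := s5.
rewrite (solT s1) in e1 g1; rewrite (solT s2) in e2 g2; rewrite (solT s3) in e3 g3.
rewrite (solT s4) in e4 g4; rewrite (solT s5) in e5 g5.
exact: (Tgen nc hd1 hcI HLT (dz _ _ s1 s2 d12) (dz _ _ s1 s3 d13) (dz _ _ s1 s4 d14) (dz _ _ s1 s5 d15)
  (dz _ _ s2 s3 d23) (dz _ _ s2 s4 d24) (dz _ _ s2 s5 d25) (dz _ _ s3 s4 d34) (dz _ _ s3 s5 d35)
  (dz _ _ s4 s5 d45) f1 f2 f3 f4 f5 g1 g2 g3 g4 g5 e1 e2 e3 e4 e5).
Qed.
End TC.

Section LC.
Hypothesis hd1 : d2 Pi Pk != d2 Pj Pl.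
Hypothesis hd2 : d2 Pi Pu != d2 Pj Pw.
Hypothesis hd3 : d2 Pk Pu != d2 Pl Pw.

Lemma lineC z0 z0' : sol z0 z0' -> (Pl.1 - Pj.1) * (Pw.2 - Pj.2) - (Pl.2 - Pj.2) * (Pw.1 - Pj.1) = 0 ->
  exists al be ga, (al, be) != (0, 0) /\ forall z z', sol z z' -> al * z.1 + be * z.2 = ga.
Proof.
move=> s0 hdet.
set b1 := Pl.1 - Pj.1 in hdet *; set b2 := Pl.2 - Pj.2 in hdet *.
set bb1 := Pw.1 - Pj.1 in hdet *; set bb2 := Pw.2 - Pj.2 in hdet *.
have [n1 [n2 [hn [hn1 hn2]]]] : exists n1 n2 : R, (n1, n2) != (0, 0) /\
    n1 * b1 + n2 * bb1 = 0 /\ n1 * b2 + n2 * bb2 = 0.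
  case: (eqVneq (b1, b2) (0, 0)) => hb.
    case: hb => -> ->; exists 1, 0; split; first by apply/pair_neq0; left; rewrite oner_eq0.
    by split; ring.
  exists (- (b1 * bb1 + b2 * bb2)), (b1 ^+ 2 + b2 ^+ 2); split.
    apply/pair_neq0; right; apply/eqP => /sumsq_eq0 [x y]; move/eqP: hb; apply.
    by rewrite x y.
  split.
    by rewrite -[RHS](mulr0 (- b2)) -hdet; ring.
  by rewrite -[RHS](mulr0 b1) -hdet; ring.
pose al := n1 * (Pk.1 - Pi.1) + n2 * (Pu.1 - Pi.1).
pose be := n1 * (Pk.2 - Pi.2) + n2 * (Pu.2 - Pi.2).
pose ga := n1 * c1 + n2 * c2.
have key : forall z z', sol z z' -> al * z.1 + be * z.2 = ga.
  move=> z z' hs; have l1 := lin1 hs; have l2 := lin2 hs.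
  move: l1 l2; rewrite /dot /psub /= => l1 l2.
  rewrite /ga -l1 -l2.
  transitivity (al * z.1 + be * z.2 - ((n1 * b1 + n2 * bb1) * z'.1 + (n1 * b2 + n2 * bb2) * z'.2)).
    by rewrite hn1 hn2 /al /be; ring.
  by rewrite /al /be /b1 /b2 /bb1 /bb2; ring.
case: (eqVneq (al, be) (0, 0)) => hab; last by exists al, be, ga.
exfalso; case: hab => ha hb.
have hg : ga = 0 by rewrite -(key _ _ s0) ha hb; ring.
case: (eqVneq n2 0) => h2.
  have h1 : n1 != 0 by move: hn; rewrite h2 => /pair_neq0 [//|]; rewrite eqxx.
  move: ha hb hn1 hn2; rewrite /al /be h2 !mul0r !addr0 => ha hb hn1 hn2.
  have a1 := mul_eq0_r ha h1; have a2 := mul_eq0_r hb h1.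
  have c1' := mul_eq0_r hn1 h1; have c2' := mul_eq0_r hn2 h1.
  move/eqP: hd1; apply; rewrite /d2.
  have -> : Pi.1 - Pk.1 = 0 by lra.
  have -> : Pi.2 - Pk.2 = 0 by lra.
  have -> : Pj.1 - Pl.1 = 0 by rewrite /b1 in c1'; lra.
  by have -> : Pj.2 - Pl.2 = 0 by rewrite /b2 in c2'; lra.
pose la := - n1 / n2.
have eu1 : Pu.1 = Pi.1 + la * (Pk.1 - Pi.1).
  apply: (mulfI h2); rewrite /la; apply/eqP; rewrite -subr_eq0; apply/eqP.
  by rewrite -[RHS]ha /al; field.
have eu2 : Pu.2 = Pi.2 + la * (Pk.2 - Pi.2).
  apply: (mulfI h2); rewrite /la; apply/eqP; rewrite -subr_eq0; apply/eqP.
  by rewrite -[RHS]hb /be; field.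
have ew1 : Pw.1 = Pj.1 + la * (Pl.1 - Pj.1).
  apply: (mulfI h2); rewrite /la; apply/eqP; rewrite -subr_eq0; apply/eqP.
  by rewrite -[RHS]hn1 /b1 /bb1; field.
have ew2 : Pw.2 = Pj.2 + la * (Pl.2 - Pj.2).
  apply: (mulfI h2); rewrite /la; apply/eqP; rewrite -subr_eq0; apply/eqP.
  by rewrite -[RHS]hn2 /b2 /bb2; field.
have hc : c2 = la * c1.
  apply: (mulfI h2); rewrite /la; apply/eqP; rewrite -subr_eq0; apply/eqP.
  by rewrite -[RHS]hg /ga; field.
have iden : c2 - la * c1 = (la ^+ 2 - la) * (d2 Pk Pi - d2 Pl Pj) / 2.
  by rewrite /c2 /c1 /sqn /d2 eu1 eu2 ew1 ew2; field.
rewrite hc subrr in iden.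
have : (la ^+ 2 - la) * (d2 Pk Pi - d2 Pl Pj) = 0.
  have h2n : (2:R) != 0 by apply/eqP; lra.
  by apply/eqP; move: iden => /esym/eqP; rewrite mulf_eq0 invr_eq0 (negbTE h2n) orbF.
move/eqP; rewrite mulf_eq0 => /orP [/eqP hl|/eqP hd].
  have : la * (la - 1) = 0 by rewrite -hl; ring.
  move/eqP; rewrite mulf_eq0 => /orP [/eqP l0|/eqP l1].
    move/eqP: hd2; apply; rewrite /d2 eu1 eu2 ew1 ew2 l0; ring.
  have l1' : la = 1 by lra.
  move/eqP: hd3; apply; rewrite /d2 eu1 eu2 ew1 ew2 l1'; ring.
move/eqP: hd1; apply.
have -> : d2 Pi Pk = d2 Pk Pi by rewrite /d2; ring.
have -> : d2 Pj Pl = d2 Pl Pj by rewrite /d2; ring.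
lra.
Qed.
End LC.
End D.

Section E.
Variable R : realType.

Definition noThree (T : eqType) (l : seq T) := forall x y z, x \in l -> y \in l -> z \in l ->
  x <> y -> z <> x -> z <> y -> False.

Lemma noThree_size (T : eqType) (l : seq T) : noThree l -> (size (undup l) <= 2)%N.
Proof.
move=> h; rewrite leqNgt; apply/negP => hs.
have hm : {subset undup l <= l} by move=> a; rewrite mem_undup.
have uu := undup_uniq l.
move: (undup l) hs uu hm => u hs uu hm.
case: u hs uu hm => [|x [|y [|z u]]] //= _.
rewrite !inE => /andP [/norP [hxy /norP [hxz _]]] /andP [/norP [hyz _]] _ hm.
apply: (h x y z).
- by apply: hm; rewrite inE eqxx.
- by apply: hm; rewrite !inE eqxx orbT.
- by apply: hm; rewrite !inE eqxx !orbT.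
- by move/eqP: hxy.
- by move=> e; move: hxz; rewrite e eqxx.
- by move=> e; move: hyz; rewrite e eqxx.
Qed.

Lemma count4 (T : eqType) (s : seq (T * T)) : uniq s ->
  noThree (map fst s) -> noThree (map snd s) -> (size s <= 4)%N.
Proof.
move=> us h1 h2.
have sub : {subset s <= [seq (x, y) | x <- undup (map fst s), y <- undup (map snd s)]}.
  move=> [x y] hp; apply/allpairsP; exists (x, y) => /=; split => //.
    by rewrite mem_undup; apply/mapP; exists (x, y).
  by rewrite mem_undup; apply/mapP; exists (x, y).
apply: leq_trans (uniq_leq_size us sub) _.
rewrite size_allpairs.
exact: (leq_trans (leq_mul (noThree_size h1) (noThree_size h2))).

Qed.

Section Main.
Variables (f : quad R) (Pi Pj Pk Pl Pu Pw : R * R).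
Hypothesis nc : noncol (fun z => qev f z = 0).
Hypothesis hd1 : d2 Pi Pk != d2 Pj Pl.
Hypothesis hd2 : d2 Pi Pu != d2 Pj Pw.
Hypothesis hd3 : d2 Pk Pu != d2 Pl Pw.
Hypothesis hcI : circ_ok f Pi.
Hypothesis hcJ : circ_ok f Pj.

Lemma sol_swap z z' : sol f Pj Pi Pl Pk Pw Pu z' z -> sol f Pi Pj Pk Pl Pu Pw z z'.
Proof. by case=> a b c d e; split. Qed.
Lemma sol_swap' z z' : sol f Pi Pj Pk Pl Pu Pw z z' -> sol f Pj Pi Pl Pk Pw Pu z' z.
Proof. by case=> a b c d e; split. Qed.

Lemma line_noThree al be ga (l : seq (R * R)) : (al, be) != (0, 0) ->
  (forall z, z \in l -> qev f z = 0 /\ al * z.1 + be * z.2 = ga) -> noThree l.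
Proof.
move=> hab hl x y z hx hy hz dxy dzx dzy.
have [fx lx] := hl x hx; have [fy ly] := hl y hy; have [fz lz] := hl z hz.
have := nc fx fy fz dxy dzx dzy.
have hcr : cross (psub y x) (psub z x) = 0.
  case/pair_neq0: hab => h.
    apply: (mul_eq0_r (a := al)) => //.
    transitivity ((z.2 - x.2) * ((al * y.1 + be * y.2) - (al * x.1 + be * x.2)) -
      (y.2 - x.2) * ((al * z.1 + be * z.2) - (al * x.1 + be * x.2))); first by rewrite /cross /psub /=; ring.
    by rewrite lx ly lz; ring.
  apply: (mul_eq0_r (a := be)) => //.
  transitivity ((y.1 - x.1) * ((al * z.1 + be * z.2) - (al * x.1 + be * x.2)) -
    (z.1 - x.1) * ((al * y.1 + be * y.2) - (al * x.1 + be * x.2))); first by rewrite /cross /psub /=; ring.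
  by rewrite lx ly lz; ring.
by rewrite hcr eqxx.
Qed.

Lemma bound4 (s : seq ((R * R) * (R * R))) : uniq s -> (forall p, p \in s -> sol f Pi Pj Pk Pl Pu Pw p.1 p.2) ->
  (size s <= 4)%N.
Proof.
move=> us hs.
pose x0 : (R * R) * (R * R) := ((0, 0), (0, 0)).
have five_of : (4 < size s)%N -> forall P : (R * R) * (R * R) -> (R * R) * (R * R) -> (R * R) * (R * R) ->
    (R * R) * (R * R) -> (R * R) * (R * R) -> Prop,
    (forall p1 p2 p3 p4 p5, p1 \in s -> p2 \in s -> p3 \in s -> p4 \in s -> p5 \in s ->
      p1 <> p2 -> p1 <> p3 -> p1 <> p4 -> p1 <> p5 -> p2 <> p3 -> p2 <> p4 -> p2 <> p5 ->
      p3 <> p4 -> p3 <> p5 -> p4 <> p5 -> P p1 p2 p3 p4 p5) -> exists p1 p2 p3 p4 p5, P p1 p2 p3 p4 p5.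
  move=> h5 P HP; exists (nth x0 s 0), (nth x0 s 1), (nth x0 s 2), (nth x0 s 3), (nth x0 s 4).
  have D : forall i j, (i < 5)%N -> (j < 5)%N -> i != j -> nth x0 s i <> nth x0 s j.
    move=> i j hi hj hij /eqP; rewrite nth_uniq //; first by apply/negP.
      exact: leq_trans hi h5.
    exact: leq_trans hj h5.
  have M : forall i, (i < 5)%N -> nth x0 s i \in s by move=> i hi; apply: mem_nth; exact: leq_trans hi h5.
  by apply: HP; rewrite ?M //; apply: D.
case: (eqVneq ((psub Pl Pj).1 * (psub Pw Pj).2 - (psub Pl Pj).2 * (psub Pw Pj).1) 0) => hB; last first.
  rewrite leqNgt; apply/negP => h5.
  have [p1 [p2 [p3 [p4 [p5 []]]]]] := five_of h5 (fun _ _ _ _ _ => False) (fun p1 p2 p3 p4 p5 m1 m2 m3 m4 m5 =>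
     Tcase nc hd1 hcI hB (hs _ m1) (hs _ m2) (hs _ m3) (hs _ m4) (hs _ m5)).
case: (eqVneq ((psub Pk Pi).1 * (psub Pu Pi).2 - (psub Pk Pi).2 * (psub Pu Pi).1) 0) => hA; last first.
  rewrite leqNgt; apply/negP => h5.
  have hd1' : d2 Pj Pl != d2 Pi Pk by rewrite eq_sym.
  have sw : forall p : (R * R) * (R * R), p \in s -> sol f Pj Pi Pl Pk Pw Pu (p.2, p.1).1 (p.2, p.1).2.
    by move=> p hp; apply: sol_swap'; apply: hs.
  have dsw : forall p q : (R * R) * (R * R), p <> q -> (p.2, p.1) <> (q.2, q.1).
    by move=> [a b] [c d] h /= [e1 e2]; apply: h; rewrite e1 e2.
  have [p1 [p2 [p3 [p4 [p5 []]]]]] := five_of h5 (fun _ _ _ _ _ => False)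
    (fun p1 p2 p3 p4 p5 m1 m2 m3 m4 m5 d12 d13 d14 d15 d23 d24 d25 d34 d35 d45 =>
     Tcase nc hd1' hcJ hA (sw _ m1) (sw _ m2) (sw _ m3) (sw _ m4) (sw _ m5)
      (dsw _ _ d12) (dsw _ _ d13) (dsw _ _ d14) (dsw _ _ d15) (dsw _ _ d23) (dsw _ _ d24)
      (dsw _ _ d25) (dsw _ _ d34) (dsw _ _ d35) (dsw _ _ d45)).
clear five_of; case: s us hs => [//|p0 s'] us hs.
have s0 := hs p0 (mem_head _ _).
have [al [be [ga [hab hl]]]] := lineC hd1 hd2 hd3 s0 hB.
have hd1' : d2 Pj Pl != d2 Pi Pk by rewrite eq_sym.
have hd2' : d2 Pj Pw != d2 Pi Pu by rewrite eq_sym.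
have hd3' : d2 Pl Pw != d2 Pk Pu by rewrite eq_sym.
have [al' [be' [ga' [hab' hl']]]] := lineC hd1' hd2' hd3' (sol_swap' s0) hA.
apply: count4 => //.
  apply: (line_noThree hab) => z /mapP [p hp ->].
  have hsp := hs p hp; split; first by case: hsp.
  exact: hl hsp.
apply: (line_noThree hab') => z /mapP [p hp ->].
have hsp := hs p hp; split; first by case: hsp.
exact: hl' (sol_swap' hsp).
Qed.
End Main.
End E.

Unset Implicit Arguments.
Set Strict Implicit.

Theorem lemma4p3 (R : realType) (d : nat)
    (C1 C2 : pt R -> Prop) (f1 f2 : {mpoly R[2]})
    (m n : nat) (p : 'I_m -> pt R) (q : 'I_n -> pt R) :
  (1 <= d)%N ->
  irreducible_curve C1 -> irreducible_curve C2 ->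
  min_degree_poly C1 f1 -> min_degree_poly C2 f2 ->
  (mdegree f1 <= d)%N -> (mdegree f2 <= d)%N ->
  injective p -> injective q ->
  (forall i, C1 (p i)) -> (forall k, C2 (q k)) ->
  (* (1) *) ~ is_vertical_line C1 -> ~ is_vertical_line C2 ->
  (* (2) *) (forall i k, p i <> q k) ->
  (* (3),(4) *) circle_conditions C1 q -> circle_conditions C2 p ->
  (* (5),(6) *) line_conditions C1 q -> line_conditions C2 p ->
  forall i j k l u w : 'I_m,
  dist (p i) (p k) <> dist (p j) (p l) ->
  dist (p i) (p u) <> dist (p j) (p w) ->
  dist (p k) (p u) <> dist (p l) (p w) ->
  is_conic C2 ->
  card_le (fun v => Cset f2 (p i) (p j) v /\ Cset f2 (p k) (p l) v /\
                     Cset f2 (p u) (p w) v) 4.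
Proof.
move=> _ _ _ _ hmin2 _ _ _ _ _ _ _ _ _ _ hcirc2 _ _ i j k l u w dik diu dku hcon.
have hs : (msize f2 <= 3)%N.
  have [_ [[g [hg hg2]] _]] := hcon.
  have := hmin2.2 g hg.1; rewrite hg2 /mdegree.
  by move=> h; apply: leq_trans (leqSpred _) _; rewrite ltnS.
have [Q hQ] := ev_quad hs.
have nc := conic_noncol hcon hmin2.1 hs hQ.
have dd : forall a b c e : pt R, dist a b <> dist c e -> d2 a b != d2 c e.
  by move=> a b c e h; apply/eqP => h'; apply: h; rewrite /dist /d2 in h' *; rewrite h'.
have circ : forall a, circ_ok Q (p a).
  move=> a [r [hr hz]].
  have hse : seteq C2 (circle_set (p a).1 (p a).2 r).
    by move=> z; rewrite (hmin2.1.2 z) /zset hQ hz /circle_set /d2.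
  have [h _] := hcirc2 _ _ _ hr hse.
  by apply: (h a); case: (p a).
move=> s us hsv.
pose g (v : R * R * R * R) : (R * R) * (R * R) := let: (x, y, x', y') := v in ((x, y), (x', y')).
have ginj : injective g by move=> [[[a b] c] e] [[[a' b'] c'] e'] /= [-> -> -> ->].
rewrite -(size_map g).
apply: (bound4 nc (dd _ _ _ _ dik) (dd _ _ _ _ diu) (dd _ _ _ _ dku) (circ i) (circ j)).
  by rewrite map_inj_uniq.
move=> pp /mapP [[[[x y] x'] y'] hv ->] /=.
have [[h1 [h2 h3]] [[_ [_ h4]] [_ [_ h5]]]] := hsv _ hv.
by split; rewrite -?hQ //.
Qed.
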